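(* Let $(G,u,v,\alpha,\beta)$ be a Guvab with $\lim_{k\to\infty}W_k=0$. If there exists $N\ge0$ such that $\{W_k\}_{k\ge N}$ is a constant sequence, then $\{W_k\}_{k\ge1}$ is a constant sequence.
   Context: A Guvab is a tuple $(G,u,v,\alpha,\beta)$ where $G$ is a finite, connected, simple graph, $u,v\in V(G)$, and $\alpha,\beta\in[0,1]$ with $\alpha\le\beta$. A random walk on $G$ with starting vertex $w$ and laziness $\gamma$ is the Markov chain $R_0=w$ and, for $i\ge1$, $R_i=R_{i-1}$ with probability $\gamma$ and $R_i=t$ with probability $\frac{1-\gamma}{\deg(R_{i-1})}$ for each neighbor $t$ of $R_{i-1}$. $\mu_k$ is the distribution after $k$ steps of the walk from $u$ with laziness $\alpha$, $\nu_k$ that of the walk from $v$ with laziness $\beta$, and $W_k=W(\mu_k,\nu_k)$ is the Wasserstein ($L^1$ optimal transport) distance with respect to the graph distance. *)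

(* Defs.v *)
From HB Require Import structures.
From mathcomp Require Import all_boot all_order all_algebra.
From mathcomp Require Import all_classical all_reals all_analysis.
Set Implicit Arguments. Unset Strict Implicit. Unset Printing Implicit Defensive.
Import Order.TTheory GRing.Theory Num.Theory.
Local Open Scope ring_scope.
Local Open Scope classical_set_scope.

Section Guvab.
Variables (R : realType) (T : finType) (e : rel T).

Definition simple_graph : Prop :=
  symmetric e /\ irreflexive e.
Definition connected_graph : Prop :=
  forall x y : T, connect e x y.

Definition nbhd (x : T) : {set T} := [set y | e x y].
Definition deg (x : T) : nat := #|nbhd x|.

Fixpoint reach (n : nat) (x : T) : {set T} :=
  match n with
  | 0 => [set x]
  | n.+1 => reach n x :|: \bigcup_(z in reach n x) nbhd z
  end.

(* graph distance: least n with y reachable in <= n steps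
   (on a connected graph such an n < #|T| always exists) *)
Definition gdist (x y : T) : nat :=
  find (fun n => y \in reach n x) (iota 0 #|T|).

(* one-step transition probability of the lazy random walk with laziness g;
   an isolated vertex (only possible when #|T| = 1) stays put. *)
Definition trans (g : R) (x y : T) : R :=
  if x == y then (if deg x == 0%N then 1 else g)
  else if e x y then (1 - g) / (deg x)%:R else 0.

Fixpoint walk_dist (g : R) (w : T) (k : nat) : T -> R :=
  match k with
  | 0 => fun y => if y == w then 1 else 0
  | k.+1 => fun y => \sum_(x : T) walk_dist g w k x * trans g x y
  end.

Definition coupling (mu nu : T -> R) (pi : T -> T -> R) : Prop :=
  (forall x y, 0 <= pi x y) /\
  (forall x, \sum_(y : T) pi x y = mu x) /\
  (forall y, \sum_(x : T) pi x y = nu y).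

Definition transport_cost (pi : T -> T -> R) : R :=
  \sum_(x : T) \sum_(y : T) (gdist x y)%:R * pi x y.

Definition wasserstein (mu nu : T -> R) : R :=
  inf [set c | exists pi, coupling mu nu pi /\ c = transport_cost pi].

Definition Wk (u v : T) (alpha beta : R) (k : nat) : R :=
  wasserstein (walk_dist alpha u k) (walk_dist beta v k).

End Guvab.

(* Main.v *)
Require Import Defs.
From HB Require Import structures.
From mathcomp Require Import all_boot all_order all_algebra.
From mathcomp Require Import all_classical all_reals all_analysis.
From mathcomp Require Import ring lra.
Import Order.TTheory GRing.Theory Num.Theory.
Import numFieldNormedType.Exports.
Local Open Scope classical_set_scope.
Local Open Scope ring_scope.

Set Implicit Arguments. Unset Strict Implicit.
Section Aux.
Variables (R : realType) (T : finType) (e : rel T).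
Hypothesis esymm : symmetric e.
Hypothesis eirr : irreflexive e.

Definition step (K : T -> T -> R) (m : T -> R) : T -> R :=
  fun y => \sum_(x : T) m x * K x y.

Definition wt (x : T) : R := (maxn (deg e x) 1)%:R.

Lemma wt_gt0 x : 0 < wt x.
Proof. by rewrite /wt ltr0n leq_max orbT. Qed.

Lemma deg_gt0 x y : e x y -> (0 < deg e x)%N.
Proof. by move=> exy; apply/card_gt0P; exists y; rewrite inE. Qed.

Lemma trans_rev (g : R) x y : wt x * trans e g x y = wt y * trans e g y x.
Proof.
rewrite /trans; case: (eqVneq x y) => [->//|nxy].
rewrite -(esymm x y).
case exy: (e x y); last by rewrite !mulr0.
have dx := deg_gt0 exy.
have eyx : e y x by rewrite esymm.
have dy := deg_gt0 eyx.
rewrite /wt !(maxn_idPl _) //.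
rewrite mulrCA divff ?mulr1 ?pnatr_eq0 -?lt0n //.
by rewrite [in RHS]mulrCA divff ?mulr1 ?pnatr_eq0 -?lt0n.
Qed.

Lemma sq_lemma (K : T -> T -> R) (m : T -> R) :
  (forall x y, wt x * K x y = wt y * K y x) ->
  (forall y, step K (step K m) y = 0) -> forall y, step K m y = 0.
Proof.
move=> rev H.
set rho := step K m.
have E : \sum_(y : T) rho y * (rho y / wt y) = 0.
  transitivity (\sum_(x : T) (m x / wt x) * step K rho x).
    rewrite /rho /step.
    under eq_bigr => y _ do rewrite mulr_suml.
    rewrite exchange_big /=; apply: eq_bigr => x _.
    rewrite mulr_sumr; apply: eq_bigr => y _.
    have wx := wt_gt0 x; have wy := wt_gt0 y.
    have Kxy : K x y = K y x * wt y / wt x.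
      apply: (mulfI (lt0r_neq0 wx)); rewrite rev; field.
      exact: lt0r_neq0.
    rewrite Kxy; field.
    by rewrite !lt0r_neq0.
  by apply: big1 => x _; rewrite H mulr0.
have ge0 : forall y, predT y -> 0 <= rho y * (rho y / wt y).
  by move=> y _; rewrite mulrA; apply: divr_ge0; [by rewrite -expr2 sqr_ge0 | exact: ltW (wt_gt0 y)].
move=> y; have := psumr_eq0P ge0 E (i := y) isT.
move/eqP; rewrite mulrA mulf_eq0 mulf_eq0 invr_eq0 orbb.
by rewrite (negbTE (lt0r_neq0 (wt_gt0 y))) orbF => /eqP.
Qed.

Lemma step_sub K (m1 m2 : T -> R) :
  step K (fun y => m1 y - m2 y) = (fun y => step K m1 y - step K m2 y).
Proof.
apply: funext => y; rewrite /step -sumrB; apply: eq_bigr => x _; ring.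
Qed.

Lemma iter_sub K n (m1 m2 : T -> R) :
  iter n (step K) (fun y => m1 y - m2 y) =
  (fun y => iter n (step K) m1 y - iter n (step K) m2 y).
Proof. by elim: n => [|n IH] //=; rewrite IH step_sub. Qed.

Lemma iter_lemma (K : T -> T -> R) :
  (forall x y, wt x * K x y = wt y * K y x) ->
  forall N m, (0 < N)%N ->
  (forall y, iter N (step K) m y = 0) -> forall y, step K m y = 0.
Proof.
move=> rev; elim=> [//|[|n] IH] m _ H; first exact: H.
apply: sq_lemma => //; apply: IH => //.
by move=> y; rewrite -iterSr; apply: H.
Qed.

Lemma walkE (g : R) w k : walk_dist e g w k = iter k (step (trans e g)) (walk_dist e g w 0).
Proof. by elim: k => [|k IH] //=; rewrite -IH. Qed.

Lemma trans_dec (g : R) x y : trans e g x y = g * (x == y)%:R + (1 - g) * trans e 0 x y.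
Proof.
rewrite /trans; case: (eqVneq x y) => [->|nxy] /=.
  by case: (deg e y == 0)%N; ring.
by case: (e x y); ring.
Qed.

Lemma step_dec (g : R) m y : step (trans e g) m y = g * m y + (1 - g) * step (trans e 0) m y.
Proof.
rewrite /step.
under eq_bigr => x _ do rewrite trans_dec mulrDr mulrCA (mulrCA (m x)).
rewrite big_split /= -!mulr_sumr; congr (_ * _ + _).
rewrite (bigD1 y) //= eqxx mulr1 big1 ?addr0 // => x /negbTE ->; by rewrite mulr0.
Qed.


Lemma fixed_lemma (g : R) w N (pi : T -> R) : (0 < N)%N ->
  (forall y, step (trans e g) pi y = pi y) -> walk_dist e g w N = pi ->
  forall k, (0 < k)%N -> walk_dist e g w k = pi.
Proof.
move=> N0 hfix hN.
set K := trans e g.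
have Kfix : step K pi = pi by apply: funext.
have iterfix : forall n, iter n (step K) pi = pi by elim=> //= n ->.
have H1 : forall y, step K (fun y => walk_dist e g w 0 y - pi y) y = 0.
  apply: (@iter_lemma K (@trans_rev g) N) => // y.
  by rewrite iter_sub iterfix -walkE hN subrr.
have W1 : walk_dist e g w 1 = pi.
  apply: funext => y; have := H1 y; rewrite step_sub Kfix => /eqP.
  by rewrite subr_eq0 => /eqP.
elim=> [//|[|k] IH] _; first exact: W1.
by change (step K (walk_dist e g w k.+1) = pi); rewrite IH.
Qed.

Lemma dyn (a b : R) u v N : (0 < N)%N -> a <= b ->
  (forall k, (N <= k)%N -> walk_dist e a u k = walk_dist e b v k) ->
  forall k, (0 < k)%N -> walk_dist e a u k = walk_dist e b v k.
Proof.
move=> N0 ab H.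
case: (eqVneq a b) => [eab|nab]; first subst b.
  set K := trans e a.
  have H1 : forall y, step K (fun y => walk_dist e a u 0 y - walk_dist e a v 0 y) y = 0.
    apply: (@iter_lemma K (@trans_rev a) N) => // y.
    by rewrite iter_sub -!walkE H // subrr.
  have W1 : walk_dist e a u 1 = walk_dist e a v 1.
    apply: funext => y; have := H1 y; rewrite step_sub => /eqP.
    by rewrite subr_eq0 => /eqP.
  elim=> [//|[|k] IH] _; first exact: W1.
  by change (step K (walk_dist e a u k.+1) = step K (walk_dist e a v k.+1)); rewrite IH.
set pi := walk_dist e a u N.
have HN1 := H N.+1 (leqnSn N).
have HN := H N (leqnn N).
have P0 : forall y, step (trans e 0) pi y = pi y.
  move=> y.
  have : step (trans e a) pi y = step (trans e b) pi y.
    by change (walk_dist e a u N.+1 y = step (trans e b) pi y); rewrite HN1 /pi HN.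
  rewrite (step_dec a) (step_dec b).
  have nz : b - a != 0 by rewrite subr_eq0 eq_sym.
  move: (pi y) (step (trans e 0) pi y) => p q Heq.
  have : (b - a) * (p - q) = 0.
    have -> : (b - a) * (p - q) = (b * p + (1 - b) * q) - (a * p + (1 - a) * q) by ring.
    by rewrite Heq subrr.
  move/eqP; rewrite mulf_eq0 (negbTE nz) orFb subr_eq0 => /eqP ->.
  done.
have Pg : forall g y, step (trans e g) pi y = pi y.
  by move=> g y; rewrite (step_dec g) P0; move: (pi y) => p; ring.
move=> k k0.
rewrite (@fixed_lemma a u N pi N0 (Pg a) erefl k k0).
by rewrite (@fixed_lemma b v N pi N0 (Pg b) (esym HN) k k0).
Qed.

Lemma trans_ge0 (g : R) x y : 0 <= g -> g <= 1 -> 0 <= trans e g x y.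
Proof.
move=> g0 g1; rewrite /trans.
case: (x == y); first by case: (deg e x == 0)%N.
case: (e x y) => //; apply: divr_ge0 => //; by rewrite subr_ge0.
Qed.

Lemma trans_sum1 (g : R) x : \sum_(y : T) trans e g x y = 1.
Proof.
rewrite (bigD1 x) //= /trans eqxx.
have E : \sum_(y | y != x) (if x == y then (if deg e x == 0%N then 1 else g)
      else if e x y then (1 - g) / (deg e x)%:R else 0)
    = \sum_(y in nbhd e x) (1 - g) / (deg e x)%:R.
  rewrite big_mkcond [RHS]big_mkcond; apply: eq_bigr => y _.
  rewrite inE; case: (eqVneq y x) => [->|nyx] /=.
    by rewrite eirr.
  by [].
rewrite E sumr_const -/(deg e x).
case: (eqVneq (deg e x) 0%N) => [->|d0]; first by rewrite mulr0n addr0.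
rewrite -[_ *+ deg e x]mulr_natr divfK ?pnatr_eq0 //; ring.
Qed.

Lemma walk_ge0 (g : R) w k y : 0 <= g -> g <= 1 -> 0 <= walk_dist e g w k y.
Proof.
move=> g0 g1; elim: k y => [|k IH] y /=; first by case: (y == w).
apply: sumr_ge0 => x _; apply: mulr_ge0 => //; exact: trans_ge0.
Qed.

Lemma walk_sum1 (g : R) w k : \sum_(y : T) walk_dist e g w k y = 1.
Proof.
elim: k => [|k IH] /=.
  rewrite (bigD1 w) //= eqxx big1 ?addr0 // => y /negbTE -> //.
rewrite exchange_big /= -[RHS]IH; apply: eq_bigr => x _.
by rewrite -mulr_sumr trans_sum1 mulr1.
Qed.

Lemma card_pos (x : T) : (0 < #|T|)%N.
Proof. by apply/card_gt0P; exists x. Qed.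

Lemma gdist_xx x : gdist e x x = 0%N.
Proof.
rewrite /gdist; move: (card_pos x); case: #|T| => [//|n] _ /=.
by rewrite inE eqxx.
Qed.

Lemma gdist_neq x y : x != y -> (1 <= gdist e x y)%N.
Proof.
move=> nxy; rewrite /gdist; move: (card_pos x); case: #|T| => [//|n] _ /=.
by rewrite inE eq_sym (negbTE nxy).
Qed.

Lemma W_self (m : T -> R) : (forall y, 0 <= m y) -> wasserstein e m m = 0.
Proof.
move=> m0; rewrite /wasserstein; set S := (X in inf X).
have S0 : S 0.
  exists (fun x y => if x == y then m x else 0); split.
    split; first by move=> x y; case: (x == y).
    split.
      move=> x; rewrite (bigD1 x) //= eqxx big1 ?addr0 // => y nyx.
      by rewrite eq_sym (negbTE nyx).
    move=> y; rewrite (bigD1 y) //= eqxx big1 ?addr0 // => x nxy.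
    by rewrite (negbTE nxy).
  apply/esym; rewrite /transport_cost big1 // => x _; apply: big1 => y _.
  by case: eqVneq => [->|_]; rewrite ?gdist_xx ?mulr0 ?mul0r.
have lb : lbound S 0.
  move=> c [pi [[pi0 _] ->]]; apply: sumr_ge0 => x _; apply: sumr_ge0 => y _.
  exact: mulr_ge0.
apply/eqP; rewrite eq_le; apply/andP; split.
  exact: (ge_inf (ex_intro _ 0 lb)) S0.
exact: (lb_le_inf (ex_intro _ 0 S0) lb).
Qed.

Lemma W_eq (m1 m2 : T -> R) : (forall y, 0 <= m1 y) -> (forall y, 0 <= m2 y) ->
  \sum_(y : T) m1 y = 1 -> \sum_(y : T) m2 y = 1 ->
  wasserstein e m1 m2 = 0 -> forall x, m1 x = m2 x.
Proof.
move=> p1 p2 s1 s2; rewrite /wasserstein; set S := (X in inf X) => W0 x0.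
have Sne : nonempty S.
  exists (transport_cost e (fun x y => m1 x * m2 y)).
  exists (fun x y => m1 x * m2 y); split => //.
  split; first by move=> x y; apply: mulr_ge0.
  split; first by move=> x; rewrite -mulr_sumr s2 mulr1.
  by move=> y; rewrite -mulr_suml s1 mul1r.
have key : forall pi, coupling m1 m2 pi ->
    m1 x0 - m2 x0 <= transport_cost e pi /\ m2 x0 - m1 x0 <= transport_cost e pi.
  move=> pi [p0 [rs cs]].
  set O := \sum_(x : T) \sum_(y : T) (x != y)%:R * pi x y.
  have cO : O <= transport_cost e pi.
    apply: ler_sum => x _; apply: ler_sum => y _; apply: ler_wpM2r => //.
    case: (eqVneq x y) => [_|nxy] /=; first by rewrite ler0n.
    by rewrite ler1n gdist_neq.
  have nn : forall x y, 0 <= (x != y)%:R * pi x y by move=> x y; apply: mulr_ge0.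
  have rowO : \sum_(y : T) (x0 != y)%:R * pi x0 y <= O.
    by rewrite /O [leRHS](bigD1 x0) //= lerDl; apply: sumr_ge0 => x _; apply: sumr_ge0.
  have colO : \sum_(x : T) (x != x0)%:R * pi x x0 <= O.
    rewrite /O exchange_big [leRHS](bigD1 x0) //= lerDl.
    by apply: sumr_ge0 => y _; apply: sumr_ge0.
  have rowE : \sum_(y : T) (x0 != y)%:R * pi x0 y = m1 x0 - pi x0 x0.
    rewrite -rs (bigD1 x0) //= [in RHS](bigD1 x0) //= eqxx mul0r add0r.
    rewrite (addrC (pi x0 x0)) addrK; apply: eq_bigr => y nyx.
    by rewrite eq_sym nyx mul1r.
  have colE : \sum_(x : T) (x != x0)%:R * pi x x0 = m2 x0 - pi x0 x0.
    rewrite -cs (bigD1 x0) //= [in RHS](bigD1 x0) //= eqxx mul0r add0r.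
    rewrite (addrC (pi x0 x0)) addrK; apply: eq_bigr => y nyx.
    by rewrite nyx mul1r.
  have le1 : pi x0 x0 <= m1 x0.
    by rewrite -rs (bigD1 x0) //= lerDl; apply: sumr_ge0.
  have le2 : pi x0 x0 <= m2 x0.
    by rewrite -cs (bigD1 x0) //= lerDl; apply: sumr_ge0 => x _.
  rewrite rowE in rowO; rewrite colE in colO.
  split; lra.
have L1 : m1 x0 - m2 x0 <= inf S.
  by apply: lb_le_inf Sne _ => c [pi [cp ->]]; case: (key pi cp).
have L2 : m2 x0 - m1 x0 <= inf S.
  by apply: lb_le_inf Sne _ => c [pi [cp ->]]; case: (key pi cp).
rewrite W0 in L1 L2; lra.
Qed.

End Aux.

Unset Implicit Arguments.

Lemma limcst (R : realType) (W : nat -> R) N :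
  W @ \oo --> (0:R) -> (forall k, (N <= k)%N -> W k = W N) -> W N = 0.
Proof.
move=> H HN.
have H2 : W @ \oo --> W N.
  apply: cvg_near_cst; near=> k; apply: HN; near: k; exact: nbhs_infty_ge.
exact: (cvg_unique _ H2 H).
Unshelve. all: by end_near.
Qed.

Theorem lemma6p5 (R : realType) (T : finType) (e : rel T) (u v : T)
    (alpha beta : R) :
  simple_graph e -> connected_graph e ->
  0 <= alpha -> alpha <= beta -> beta <= 1 ->
  (fun k => Wk e u v alpha beta k) @ \oo --> (0 : R) ->
  (exists N : nat, forall k : nat, (N <= k)%N ->
     Wk e u v alpha beta k = Wk e u v alpha beta N) ->
  forall k : nat, (1 <= k)%N ->
     Wk e u v alpha beta k = Wk e u v alpha beta 1.
Proof.
move=> [esymm eirr] _ a0 ab b1 Hlim [N HN] k k1.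
have b0 : 0 <= beta by apply: le_trans ab.
have a1 : alpha <= 1 by apply: le_trans b1.
have WN0 := limcst _ _ _ Hlim HN.
have eqk : forall j, (N.+1 <= j)%N ->
    walk_dist e alpha u j = walk_dist e beta v j.
  move=> j hj; apply: funext => y.
  apply: (W_eq (e := e)).
  - by move=> z; apply: walk_ge0.
  - by move=> z; apply: walk_ge0.
  - exact: walk_sum1.
  - exact: walk_sum1.
  - by rewrite -/(Wk e u v alpha beta j) HN ?WN0 // ltnW.
have all := @dyn _ _ _ esymm alpha beta u v N.+1 (ltn0Sn N) ab eqk.
rewrite /Wk -all // -all // !W_self // => z; exact: walk_ge0.
Qed.
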